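(* Let $(E,\rho)$ be a Polish metric space and $\{P(t)\}_{t\geq 0}$ a Markov semigroup of stochastic kernels on $E$. Let $V:E\to[0,\infty)$ be continuous and assume: (a) $\{P(t)\}$ has a unique invariant probability measure $\mu_*$, and there are $\gamma>0$ and a map $C:\{\nu\in\mathcal{M}_1(E):\int V\,d\nu<\infty\}\to[0,\infty)$ with $d_{\mathrm{FM}}(\nu P(t),\mu_* )\leq C(\nu)e^{-\gamma t}$ for all $t\geq 0$ and all such $\nu$, where $C(\delta_x)=\bar C(x):=\varkappa(V(x)+1)^{1/2}$ for some $\varkappa>0$; (b) there exist $A,B\geq 0$, $\Gamma>0$ with $P(t)V^2(x)\leq Ae^{-\Gamma t}V^2(x)+B$ for all $x\in E$, $t\geq 0$. Then for every $p\in(0,4]$: $\sup_{t\geq 0}\int_E\bar C^p\,d(\nu P(t))<\infty$ whenever $\nu\in\mathcal{M}_1(E)$ satisfies $\int_E V^2\,d\nu<\infty$; and $\int_E\bar C^p\,d\mu_*<\infty$. In particular $\int_E V^2\,d\mu_*<\infty$.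
   Context: $\mathcal{M}_1(E)$: Borel probability measures on $E$. $d_{\mathrm{FM}}(\mu,\nu)=\sup\{|\int f\,d\mu-\int f\,d\nu|: \|f\|_{\mathrm{BL}}\leq 1\}$, where $\|f\|_{\mathrm{BL}}=\max\{\|f\|_\infty,\sup_{x\neq y}|f(x)-f(y)|/\rho(x,y)\}$. $\nu P(t)(\cdot)=\int_E P(t)(x,\cdot)\,\nu(dx)$; invariance means $\mu_*P(t)=\mu_*$ for all $t$. *)

(* Defs.v *)
From HB Require Import structures.
From mathcomp Require Import all_boot all_order all_algebra.
From mathcomp Require Import all_classical all_reals all_analysis.
Set Implicit Arguments. Unset Strict Implicit. Unset Printing Implicit Defensive.
Import Order.TTheory GRing.Theory Num.Theory.
Local Open Scope classical_set_scope.
Local Open Scope ring_scope.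

Section metric_defs.
Context {R : realType} {T : Type}.
Variable rho : T -> T -> R.

Definition is_metric : Prop :=
  [/\ forall x y, rho x y = 0 <-> x = y,
      forall x y, rho x y = rho y x &
      forall x y z, rho x z <= rho x y + rho y z].

Definition rho_open : set (set T) :=
  [set A | forall x, A x -> exists2 e : R, 0 < e & [set y | rho x y < e] `<=` A].

Definition rho_cauchy (u : nat -> T) : Prop :=
  forall e : R, 0 < e -> exists N, forall m n, (N <= m)%N -> (N <= n)%N ->
    rho (u m) (u n) < e.

Definition rho_cvg (u : nat -> T) (l : T) : Prop :=
  forall e : R, 0 < e -> exists N, forall n, (N <= n)%N -> rho (u n) l < e.

Definition rho_complete : Prop :=
  forall u, rho_cauchy u -> exists l, rho_cvg u l.

Definition rho_separable : Prop :=
  exists D : set T, countable D /\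
    forall x (e : R), 0 < e -> exists2 y, D y & rho x y < e.

Definition rho_continuous (V : T -> R) : Prop :=
  forall x (e : R), 0 < e -> exists2 d : R, 0 < d &
    forall y, rho x y < d -> `|V x - V y| < e.

Definition BL1 : set (T -> R) :=
  [set f | (forall x, `|f x| <= 1) /\
           (forall x y, x <> y -> `|f x - f y| <= rho x y)].
End metric_defs.

Definition polish_borel {d} {R : realType} (T : measurableType d)
    (rho : T -> T -> R) : Prop :=
  [/\ is_metric rho, rho_complete rho, rho_separable rho &
      (@measurable d T) = <<s rho_open rho >>].

Section kact.
Local Open Scope ereal_scope.
Context d (T : measurableType d) (R : realType).
Variables (nu : {measure set T -> \bar R}) (k : R.-ker T ~> T).

Definition kact (A : set T) : \bar R := \int[nu]_x k x A.

Let kact0 : kact set0 = 0.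
Proof.
by rewrite /kact (eq_integral (cst 0)) ?integral0// => y _; rewrite measure0.
Qed.

Let kact_ge0 U : 0 <= kact U. Proof. exact: integral_ge0. Qed.

Let kact_sigma_additive : semi_sigma_additive kact.
Proof.
move=> U mU tU mUU; rewrite [X in _ --> X](_ : _ =
  \int[nu]_y (\sum_(n <oo) k y (U n))); last first.
  apply: eq_integral => V _.
  by apply/esym/cvg_lim => //; exact/measure_semi_sigma_additive.
apply/cvg_closeP; split.
  by apply: is_cvg_nneseries => n _ _; exact: integral_ge0.
rewrite closeE// integral_nneseries// => n.
exact: measurable_kernel k _ (mU n).
Qed.

HB.instance Definition _ := isMeasure.Build _ _ R
  kact kact0 kact_ge0 kact_sigma_additive.

Definition mkact : {measure set T -> \bar R} := kact.
End kact.

Section semigroup.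
Local Open Scope ereal_scope.
Context d (T : measurableType d) (R : realType).

Definition markov_semigroup (P : R -> R.-pker T ~> T) : Prop :=
  (forall x A, measurable A -> P 0%R x A = \d_x A) /\
  (forall s t : R, (0 <= s)%R -> (0 <= t)%R -> forall x A, measurable A ->
     P (s + t)%R x A = \int[P s x]_y P t y A).

Definition invariant_measure (P : R -> R.-pker T ~> T)
    (mu : {measure set T -> \bar R}) : Prop :=
  forall t : R, (0 <= t)%R -> forall A, measurable A -> mkact mu (P t) A = mu A.

Definition dFM (rho : T -> T -> R) (mu nu : {measure set T -> \bar R}) : \bar R :=
  ereal_sup [set `| \int[mu]_x (f x)%:E - \int[nu]_x (f x)%:E |
            | f in BL1 rho].
End semigroup.
Arguments markov_semigroup {d T R} P.
Arguments invariant_measure {d T R} P mu.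
Arguments dFM {d T R} rho mu nu.
Arguments mkact {d T R} nu k.
Arguments polish_borel {d R T} rho.

(* Main.v *)
Require Import Defs.
From HB Require Import structures.
From mathcomp Require Import all_boot all_order all_algebra.
From mathcomp Require Import all_classical all_reals all_analysis.
From mathcomp Require Import measurable_realfun.
From mathcomp Require Import ring lra.
Import Order.TTheory GRing.Theory Num.Theory.
Local Open Scope classical_set_scope.
Local Open Scope ring_scope.
Section integral_mkact.
Local Open Scope ereal_scope.
Context d (T : measurableType d) (R : realType).
Variables (nu : {measure set T -> \bar R}) (k : R.-ker T ~> T).

Let iindic E (mE : measurable E) :
  \int[mkact nu k]_z (\1_E z)%:E = \int[nu]_y (\int[k y]_z (\1_E z)%:E).
Proof.
rewrite integral_indic//= /mkact /kact setIT.
by apply: eq_integral => y _; rewrite integral_indic// setIT.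
Qed.

Import HBNNSimple.

Let innsfun (f : {nnsfun T >-> R}) :
  \int[mkact nu k]_z (f z)%:E = \int[nu]_y (\int[k y]_z (f z)%:E).
Proof.
under [in LHS]eq_integral do rewrite fimfunE -fsumEFin//.
rewrite ge0_integral_fsum//; last 2 first.
  - by move=> r; exact/measurable_EFinP/measurableT_comp.
  - by move=> r z _; rewrite EFinM nnfun_muleindic_ge0.
under [in RHS]eq_integral.
  move=> y _.
  under eq_integral.
    by move=> z _; rewrite fimfunE -fsumEFin//; over.
  rewrite /= ge0_integral_fsum//; last 2 first.
    - by move=> r; exact/measurable_EFinP/measurableT_comp.
    - by move=> r z _; rewrite EFinM nnfun_muleindic_ge0.
  under eq_fsbigr.
    move=> r _.
    rewrite (integralZl_indic _ (fun r => f @^-1` [set r]))//; last first.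
      by move=> r0; rewrite preimage_nnfun0.
    rewrite integral_indic// setIT.
    over.
  over.
rewrite /= ge0_integral_fsum//; last 2 first.
  - move=> r; apply: measurable_funeM.
    exact: (measurable_kernel k (f @^-1` [set r]) _).
  - move=> n y _.
    have := mulemu_ge0 (fun n => f @^-1` [set n]).
    by apply; exact: preimage_nnfun0.
apply: eq_fsbigr => r _.
rewrite (integralZl_indic _ (fun r => f @^-1` [set r]))//; last first.
  exact: preimage_nnfun0.
rewrite /= iindic//.
have [r0|r0] := leP 0%R r.
  rewrite ge0_integralZl//.
    by under eq_integral do rewrite integral_indic// setIT.
  exact: (measurable_kernel k (f @^-1` [set r]) _).
rewrite integral0_eq ?mule0.
  by rewrite integral0_eq// => y _; rewrite preimage_nnfun0// measure0 mule0.
by move=> y _; rewrite integral0_eq// => z _; rewrite preimage_nnfun0// indic0.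
Qed.

Lemma integral_mkact f : (forall z, 0 <= f z) -> measurable_fun [set: T] f ->
  \int[mkact nu k]_z f z = \int[nu]_y (\int[k y]_z f z).
Proof.
move=> f0 mf.
pose f_ := nnsfun_approx measurableT mf.
transitivity (\int[mkact nu k]_z (lim ((f_ n z)%:E @[n --> \oo]))).
  by apply/eq_integral => z _; apply/esym/cvg_lim => //=; exact: cvg_nnsfun_approx.
rewrite monotone_convergence//; last 3 first.
  by move=> n; exact/measurable_EFinP.
  by move=> n z _; rewrite lee_fin.
  by move=> z _ a b ab; rewrite lee_fin; exact/lefP/nd_nnsfun_approx.
rewrite (_ : (fun _ => _) =
    (fun n => \int[nu]_y (\int[k y]_z (f_ n z)%:E)))//; last first.
  by apply/funext => n; rewrite innsfun.
transitivity (\int[nu]_y lim ((\int[k y]_z (f_ n z)%:E) @[n --> \oo])).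
  rewrite -monotone_convergence//; last 3 first.
  - move=> n; apply: measurable_fun_integral_kernel => //.
    + by move=> U mU; exact: (measurable_kernel k _ mU).
    + by move=> z; rewrite lee_fin.
    + exact/measurable_EFinP.
  - by move=> n y _; apply: integral_ge0 => // z _; rewrite lee_fin.
  - move=> y _ a b ab; apply: ge0_le_integral => //.
    + by move=> z _; rewrite lee_fin.
    + exact/measurable_EFinP.
    + exact/measurable_EFinP.
    + by move=> z _; rewrite lee_fin; exact/lefP/nd_nnsfun_approx.
apply: eq_integral => y _; rewrite -monotone_convergence//; last 3 first.
  - by move=> n; exact/measurable_EFinP.
  - by move=> n z _; rewrite lee_fin.
  - by move=> z _ a b ab; rewrite lee_fin; exact/lefP/nd_nnsfun_approx.
by apply: eq_integral => z _; apply/cvg_lim => //; exact: cvg_nnsfun_approx.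
Qed.
End integral_mkact.

Lemma rho_cont_measurable (R : realType) d (T : measurableType d)
  (rho : T -> T -> R) (V : T -> R) :
  polish_borel rho -> rho_continuous rho V -> measurable_fun [set: T] V.
Proof.
move=> [_ _ _ hm] hc.
apply: (measurability _ (RGenOInfty.measurableE R)).
move=> _ [_ [a ->] <-].
rewrite setTI hm; apply: sub_sigma_algebra => x /=.
rewrite in_itv /= andbT => ax.
have [e e0 he] := hc x (V x - a) ltac:(by rewrite subr_gt0).
exists e => // y /= /he.
rewrite in_itv /= andbT => h.
have := ler_norm (V x - V y); move: h.
lra.
Qed.

Lemma pow_bound (R : realType) (kappa p v : R) : 0 < kappa -> 0 <= v -> 0 < p <= 4 ->
  (kappa * Num.sqrt (v + 1)) `^ p <= (1 + 2 * kappa ^+ 4) + 2 * kappa ^+ 4 * v ^+ 2.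
Proof.
move=> k0 v0 /andP[p0 p4].
set b := kappa * Num.sqrt (v + 1).
have b0 : 0 <= b by apply: mulr_ge0; [exact: ltW | exact: sqrtr_ge0].
have b4 : b ^+ 4 = kappa ^+ 4 * (v + 1) ^+ 2.
  rewrite /b exprMn; congr (_ * _).
  by rewrite (_ : 4%N = (2 * 2)%N)// exprM sqr_sqrtr// addr_ge0.
have h : b `^ p <= 1 + b ^+ 4.
  have [b1|b1] := leP b 1.
    apply: (@le_trans _ _ 1); last by rewrite lerDl exprn_ge0.
    have [->|bn0] := eqVneq b 0.
      by rewrite powR0 ?gt_eqF.
    have := @ger_powR _ b ltac:(by rewrite lt0r bn0 b0 b1) 0 p (ltW p0).
    by rewrite powRr0.
  apply: (@le_trans _ _ (b ^+ 4)); last by rewrite lerDr.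
  rewrite -powR_mulrn//.
  exact: ler_powR (ltW b1) _ _ p4.
apply: (le_trans h); rewrite b4 -addrA lerD2l.
have k4 : 0 <= kappa ^+ 4 by rewrite exprn_ge0 ?ltW.
have := mulr_ge0 k4 (sqr_ge0 (v - 1)).
nra.
Qed.

Lemma choose_t (R : realType) (A K G dl : R) : 0 <= A -> 0 <= K -> 0 < G -> 0 < dl ->
  exists t, 0 <= t /\ A * expR (- G * t) * K <= dl.
Proof.
move=> A0 K0 G0 d0.
exists (A * K / (G * dl)); split.
  by apply: divr_ge0; apply: mulr_ge0 => //; exact: ltW.
set t := A * K / (G * dl).
have e := expR_ge1Dx (G * t).
have ep : 0 < expR (G * t) := expR_gt0 _.
rewrite mulNr expRN.
rewrite mulrAC ler_pdivrMr//.
apply: le_trans (ler_wpM2l (ltW d0) e).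
have -> : G * t = A * K / dl.
  rewrite /t; field; apply/andP; split; exact: lt0r_neq0.
rewrite mulrDr mulr1 mulrCA divff ?gt_eqF// mulr1 lerDr; exact: ltW.
Qed.

Lemma tail_small (R : realType) d (T : measurableType d) (mu : probability T R)
  (g : T -> R) : measurable_fun [set: T] g ->
  forall eps : R, 0 < eps -> exists K : nat,
    (mu [set x | (K%:R < g x)%R] <= eps%:E)%E.
Proof.
move=> mg eps e0.
pose F (n : nat) := [set x | n%:R < g x].
have FE n : F n = [set: T] `&` g @^-1` `]n%:R, +oo[.
  by rewrite setTI; apply/seteqP; split => x /=; rewrite in_itv /= andbT.
have mF n : measurable (F n) by rewrite FE; exact: mg.
have cap0 : \bigcap_n F n = set0.
  apply/seteqP; split => x //= hx.
  have := hx (Num.bound `|g x|) I; rewrite /F /=.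
  have := archi_boundP (normr_ge0 (g x)).
  have := ler_norm (g x).
  move=> h1 h2 h3; have := lt_trans h3 (le_lt_trans h1 h2).
  by rewrite ltxx.
have := @nonincreasing_cvg_mu _ _ _ mu F.
rewrite cap0 measure0 => /(_ _ mF measurable0) h.
have {h} : (mu \o F) @ \oo --> 0%E.
  apply: h.
    by apply: (le_lt_trans (probability_le1 _ (mF 0%N))); exact: ltey.
  move=> n m nm; apply/subsetPset => x; rewrite /F /= => hm.
  by apply: le_lt_trans hm; rewrite ler_nat.
move/fine_cvgP => [hfin /cvgrPdist_lt /(_ eps e0) hc].
have hev : \forall n \near \oo, (mu (F n) <= eps%:E)%E.
  apply: filterS2 hfin hc => n /= fn; rewrite sub0r normrN => hn.
  rewrite -(fineK fn) lee_fin.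
  apply: le_trans (ltW hn).
  exact: ler_norm.
case: hev => N _ HN; exists N; exact: (HN N (leqnn N)).
Qed.

Section lin.
Local Open Scope ereal_scope.
Context (R : realType) d (T : measurableType d).

Lemma lin (m : {measure set T -> \bar R}) (hm : m setT = 1) (W : T -> R)
  (W0 : forall x, (0 <= W x)%R) (mW : measurable_fun setT W) (al be : R) :
  (0 <= al)%R -> (0 <= be)%R ->
  \int[m]_x ((al + be * W x)%R%:E) = al%:E + be%:E * \int[m]_x (W x)%:E.
Proof.
move=> a0 b0.
under eq_integral do rewrite EFinD EFinM.
rewrite ge0_integralD//.
all: try (by move=> x _; rewrite lee_fin).
all: try (by move=> x _; rewrite mule_ge0// lee_fin).
all: try (by apply: measurable_funeM; exact/measurable_EFinP).
rewrite integral_cst// hm mule1 ge0_integralZl//.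
- exact/measurable_EFinP.
- by move=> x _; rewrite lee_fin.
Qed.

Lemma kbound (mu : {measure set T -> \bar R}) (hmu : mu setT = 1)
  (k : R.-pker T ~> T) (W : T -> R)
  (W0 : forall x, (0 <= W x)%R) (mW : measurable_fun setT W) (a b al be : R)
  (g : T -> R) :
  (0 <= a)%R -> (0 <= b)%R -> (0 <= al)%R -> (0 <= be)%R ->
  (forall x, \int[k x]_y (W y)%:E <= (a * W x + b)%:E) ->
  (forall x, (0 <= g x)%R) -> measurable_fun setT g ->
  (forall x, (g x <= al + be * W x)%R) ->
  \int[mkact mu k]_x (g x)%:E <= (al + be * b)%:E + (be * a)%:E * \int[mu]_x (W x)%:E.
Proof.
move=> a0 b0 al0 be0 hk g0 mg hg.
have mab : measurable_fun setT (fun x => (al + be * W x)%R).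
  apply: measurable_funD; first exact: measurable_cst.
  exact: measurable_funM (measurable_cst _) mW.
apply: (@le_trans _ _ (\int[mkact mu k]_x ((al + be * W x)%R%:E))).
  apply: ge0_le_integral => //.
  - by move=> x _; rewrite lee_fin.
  - exact/measurable_EFinP.
  - exact/measurable_EFinP.
  - by move=> x _; rewrite lee_fin.
rewrite integral_mkact//; last 2 first.
  - by move=> x; rewrite lee_fin; apply: addr_ge0 => //; exact: mulr_ge0.
  - exact/measurable_EFinP.
rewrite -lin//; last 2 first.
  - by apply: addr_ge0 => //; exact: mulr_ge0.
  - exact: mulr_ge0.
apply: ge0_le_integral => //.
- move=> x _; apply: integral_ge0 => y _.
  by rewrite lee_fin; apply: addr_ge0 => //; exact: mulr_ge0.
- apply: measurable_fun_integral_kernel.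
  + by move=> U mU; exact: (measurable_kernel k _ mU).
  + by move=> z; rewrite lee_fin; apply: addr_ge0 => //; exact: mulr_ge0.
  + exact/measurable_EFinP.
- apply/measurable_EFinP; apply: measurable_funD; first exact: measurable_cst.
  exact: measurable_funM (measurable_cst _) mW.
move=> x _.
rewrite lin//; last exact: prob_kernel.
have i0 : 0 <= \int[k x]_y (W y)%:E by apply: integral_ge0 => y _; rewrite lee_fin.
have fi : \int[k x]_y (W y)%:E \is a fin_num.
  by rewrite ge0_fin_numE//; apply: le_lt_trans (hk x) _; exact: ltry.
have := hk x; rewrite -(fineK fi) -EFinM -EFinD !lee_fin => h.
have := ler_wpM2l be0 h.
have := W0 x.
nra.
Qed.
End lin.

Section core.
Local Open Scope ereal_scope.
Context (R : realType) d (T : measurableType d).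

Lemma core (mu : probability T R) (P : R -> R.-pker T ~> T) (W : T -> R)
  (W0 : forall x, (0 <= W x)%R) (mW : measurable_fun setT W) (A B Gam : R) :
  (0 <= A)%R -> (0 <= B)%R -> (0 < Gam)%R ->
  (forall t : R, (0 <= t)%R -> forall S, measurable S -> mkact mu (P t) S = mu S) ->
  (forall x t, (0 <= t)%R ->
     \int[P t x]_y (W y)%:E <= (A * expR (- Gam * t) * W x + B)%:E) ->
  \int[mu]_x (W x)%:E <= B%:E.
Proof.
move=> A0 B0 G0 hinv hb.
pose g (n : nat) x := (Num.min (W x) n%:R)%:E.
have mg n : measurable_fun setT (g n).
  apply/measurable_EFinP; apply: measurable_minr => //; exact: measurable_cst.
have g0 n x : 0 <= g n x by rewrite lee_fin le_min W0 ler0n.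
have step : forall N : nat, \int[mu]_x g N x <= B%:E.
  move=> N.
  apply/lee_addgt0Pr => e e0.
  have e20 : (0 < e / 2)%R by rewrite divr_gt0.
  have eN0 : (0 < e / 2 / N.+1%:R)%R by rewrite divr_gt0.
  have [K hK] := @tail_small _ _ _ mu W mW _ eN0.
  have [t [t0 ht]] := @choose_t _ A K%:R Gam (e/2) A0 (ler0n _ K) G0 e20.
  rewrite (eq_measure_integral (mkact mu (P t))); last first.
    by move=> S mS _; rewrite hinv.
  rewrite integral_mkact//; try (by move=> z; exact: g0); try exact: mg.
  pose S := [set x | (K%:R < W x)%R].
  have mS : measurable S.
    have -> : S = [set: T] `&` W @^-1` `]K%:R, +oo[.
      by rewrite setTI; apply/seteqP; split => x /=; rewrite in_itv /= andbT.
    exact: mW.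
  apply: (@le_trans _ _ (\int[mu]_x ((B + e / 2)%R%:E + (N%:R%:E * (\1_S x)%:E)))).
    apply: ge0_le_integral => //.
    - by move=> x _; apply: integral_ge0 => y _; exact: g0.
    - apply: measurable_fun_integral_kernel => //.
      by move=> U mU; exact: (measurable_kernel (P t) _ mU).
    - apply: emeasurable_funD; first exact: measurable_cst.
      apply: measurable_funeM; apply/measurable_EFinP.
      exact/measurable_indicP.
    move=> x _.
    rewrite indicE.
    have [hx|hx] := ltP (K%:R) (W x).
      rewrite mem_set// mule1.
      apply: (@le_trans _ _ (\int[P t x]_y (N%:R)%:E)).
        apply: ge0_le_integral => //.
        all: try (by move=> y _; exact: g0).
        all: try exact: mg.
        all: try exact: measurable_cst.
        by move=> y _; rewrite lee_fin ge_min lexx orbT.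
      rewrite integral_cst// prob_kernel mule1 -EFinD lee_fin lerDr.
      by apply: addr_ge0 => //; exact: ltW.
    rewrite memNset; last by rewrite /S /=; apply/negP; rewrite -leNgt.
    rewrite mule0 adde0.
    apply: (@le_trans _ _ (\int[P t x]_y (W y)%:E)).
      apply: ge0_le_integral => //.
      all: try (by move=> y _; exact: g0).
      all: try exact: mg.
      all: try exact/measurable_EFinP.
      by move=> y _; rewrite lee_fin ge_min lexx.
    apply: (le_trans (hb x t t0)); rewrite lee_fin addrC lerD2l.
    apply: le_trans ht; apply: ler_wpM2l => //.
    by apply: mulr_ge0 => //; exact: expR_ge0.
  rewrite ge0_integralD//; last first.
  all: try (by move=> x _; rewrite lee_fin; apply: addr_ge0 => //; exact: ltW).
  all: try (by move=> x _; rewrite mule_ge0// lee_fin).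
  all: try (by apply: measurable_funeM; apply/measurable_EFinP; exact/measurable_indicP).
  rewrite integral_cst//.
  rewrite [X in _ * X](_ : _ = 1); last exact: probability_setT.
  rewrite mule1 ge0_integralZl//.
  all: try (by apply/measurable_EFinP; exact/measurable_indicP).
  all: try (by move=> x _; rewrite lee_fin).
  rewrite integral_indic// setIT.
  have hK2 : (mu : {measure set T -> \bar R}) S <= (e / 2 / N.+1%:R)%:E := hK.
  have fS : (mu : {measure set T -> \bar R}) S \is a fin_num.
    rewrite ge0_fin_numE//; apply: (le_lt_trans hK2); exact: ltry.
  have hK' : (fine ((mu : {measure set T -> \bar R}) S) <= e / 2 / N.+1%:R)%R by rewrite -lee_fin fineK.
  rewrite -(fineK fS) -EFinM -EFinD lee_fin.
  have h1 := ler_wpM2l (ler0n _ N) hK'.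
  have h2 : (N%:R * (e / 2 / N.+1%:R) <= e / 2)%R.
    rewrite mulrA ler_pdivrMr ?ltr0n//.
    rewrite mulrC; apply: ler_wpM2l; [exact: ltW | by rewrite ler_nat].
  have h3 := le_trans h1 h2.
  rewrite -addrA lerD2l.
  by rewrite [leRHS](splitr e) lerD2l.
have nd x : [set: T] x -> nondecreasing_seq (g ^~ x).
  move=> _ n m nm; rewrite /g lee_fin le_min !ge_min lexx /=.
  by rewrite ler_nat nm !orbT.
have hcvg := @cvg_monotone_convergence _ _ _ mu _ measurableT g (fun n => mg n)
  (fun n x _ => g0 n x) nd.
have hlim x : limn (g ^~ x) = (W x)%:E.
  apply: cvg_lim => //; apply: cvg_near_cst.
  exists (Num.bound (W x)) => // n /= hn.
  rewrite /g; congr EFin; apply: min_l.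
  apply: (le_trans (ltW (archi_boundP (W0 x)))).
  by rewrite ler_nat.
have -> : \int[mu]_x (W x)%:E = \int[mu]_x limn (g ^~ x).
  by apply: eq_integral => x _; rewrite hlim.
rewrite -(cvg_lim _ hcvg)//.
apply: lime_le; first by apply/cvg_ex; eexists; exact: hcvg.
exact: nearW step.
Qed.
End core.

Theorem corollary3p4 (R : realType) (d : measure_display) (T : measurableType d)
  (rho : T -> T -> R) (P : R -> R.-pker T ~> T) (V : T -> R)
  (mustar : probability T R) (kappa : R) :
  polish_borel rho ->
  markov_semigroup P ->
  rho_continuous rho V ->
  (forall x, 0 <= V x) ->
  (* (a) *)
  invariant_measure P mustar ->
  (forall mu : probability T R, invariant_measure P mu ->
     forall A, measurable A -> mu A = mustar A) ->
  0 < kappa ->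
  (exists (gamma : R) (C : {measure set T -> \bar R} -> R),
     [/\ 0 < gamma,
         (forall nu : probability T R,
            (\int[nu]_x (V x)%:E < +oo)%E -> 0 <= C nu),
         (forall x, C (\d_x) = kappa * Num.sqrt (V x + 1)) &
         (forall nu : probability T R, (\int[nu]_x (V x)%:E < +oo)%E ->
            forall t, 0 <= t ->
            (dFM rho (mkact nu (P t)) mustar <= (C nu * expR (- gamma * t))%:E)%E)]) ->
  (* (b) *)
  (exists A B Gamma : R, [/\ 0 <= A, 0 <= B, 0 < Gamma &
     forall x t, 0 <= t ->
       (\int[P t x]_y (V y ^+ 2)%:E <= (A * expR (- Gamma * t) * V x ^+ 2 + B)%:E)%E]) ->
  (forall p : R, 0 < p <= 4 ->
     (forall nu : probability T R, (\int[nu]_x (V x ^+ 2)%:E < +oo)%E ->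
        exists M : R, forall t, 0 <= t ->
          (\int[mkact nu (P t)]_x ((kappa * Num.sqrt (V x + 1)) `^ p)%:E
             <= M%:E)%E) /\
     (\int[mustar]_x ((kappa * Num.sqrt (V x + 1)) `^ p)%:E < +oo)%E) /\
  (\int[mustar]_x (V x ^+ 2)%:E < +oo)%E.
Proof.
move=> hpol _ hVc hV0 hinv _ hk _ [A [B [Gam [hA hB hG hb]]]].
have mV := @rho_cont_measurable _ _ _ rho V hpol hVc.
have W0 x : 0 <= V x ^+ 2 by exact: exprn_ge0.
have mW : measurable_fun setT (fun x => V x ^+ 2) by exact: measurable_funX.
have hb' : forall t, 0 <= t -> forall x,
    (\int[P t x]_y (V y ^+ 2)%:E <= (A * V x ^+ 2 + B)%:E)%E.
  move=> t t0 x; apply: le_trans (hb x t t0) _; rewrite lee_fin lerD2r.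
  apply: ler_wpM2r; first exact: W0.
  rewrite -[leRHS](mulr1 A); apply: ler_wpM2l; first exact: hA.
  by rewrite expR_le1 mulNr oppr_le0; apply: mulr_ge0 => //; exact: ltW.
have hcore : (\int[mustar]_x (V x ^+ 2)%:E <= B%:E)%E.
  exact: (@core R d T mustar P (fun x => V x ^+ 2) W0 mW A B Gam hA hB hG hinv hb).
split; last by apply: le_lt_trans hcore _; exact: ltry.
move=> p hp.
pose c := 2 * kappa ^+ 4.
have c0 : 0 <= c by apply: mulr_ge0 => //; apply: exprn_ge0; exact: ltW.
have al0 : 0 <= 1 + c by apply: addr_ge0.
have pb x : (kappa * Num.sqrt (V x + 1)) `^ p <= (1 + c) + c * V x ^+ 2.
  exact: pow_bound.
have mb : measurable_fun setT (fun x => (kappa * Num.sqrt (V x + 1)) `^ p).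
  apply: measurableT_comp (measurable_powR p) _.
  apply: measurable_funM; first exact: measurable_cst.
  apply: measurableT_comp (continuous_measurable_fun (@sqrt_continuous R)) _.
  by apply: measurable_funD => //; exact: measurable_cst.
have b0 x : 0 <= (kappa * Num.sqrt (V x + 1)) `^ p by exact: powR_ge0.
split.
- move=> nu hnu.
  have fi : (\int[nu]_x (V x ^+ 2)%:E)%E \is a fin_num.
    by rewrite ge0_fin_numE//; apply: integral_ge0 => x _; rewrite lee_fin.
  exists ((1 + c + c * B) + (c * A) * fine (\int[nu]_x (V x ^+ 2)%:E)%E).
  move=> t t0.
  have := @kbound R d T nu (probability_setT nu) (P t) (fun x => V x ^+ 2) W0 mW
    A B (1 + c) c (fun x => (kappa * Num.sqrt (V x + 1)) `^ p) hA hB al0 c0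
    (hb' t t0) b0 mb pb.
  by rewrite -(fineK fi) -EFinM -EFinD.
- have fi : (\int[mustar]_x (V x ^+ 2)%:E)%E \is a fin_num.
    rewrite ge0_fin_numE//; last by apply: integral_ge0 => x _; rewrite lee_fin.
    by apply: le_lt_trans hcore _; exact: ltry.
  apply: (@le_lt_trans _ _ (\int[mustar]_x ((1 + c) + c * V x ^+ 2)%:E)%E).
    apply: ge0_le_integral => //.
    + by move=> x _; rewrite lee_fin.
    + exact/measurable_EFinP.
    + apply/measurable_EFinP; apply: measurable_funD; first exact: measurable_cst.
      exact: measurable_funM (measurable_cst _) mW.
    + by move=> x _; rewrite lee_fin.
  rewrite (@lin R d T mustar (probability_setT mustar) (fun x => V x ^+ 2) W0 mW _ _ al0 c0).
  by rewrite -(fineK fi) -EFinM -EFinD; exact: ltry.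
Qed.
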